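(* Let $g:\mathbb{C}\to\mathbb{C}$ be a harmonic map (real and imaginary parts harmonic) such that $\mathcal{D}(g(\mathbb{C}))$ contains no pair of antipodal points. Then there exist $\theta\in[0,2\pi)$, $\rho>0$ and $a>1$ such that, writing $f=e^{i\theta}g$ and $\mathcal{R}_f=f(\mathbb{C})$, $$\mathcal{R}_f\subset\overline{D}(0,\rho)\cup\Big(\{u+iv:\ |v|\le a|u|\}\setminus\{u+iv:\ |v|\le -\tfrac{1}{a}u\}\Big).$$
   Context: $\partial\mathbb{D}$ is the unit circle. For $\mathcal{R}\subset\mathbb{C}$, $e^{i\theta}\in\partial\mathbb{D}$ is an asymptotic direction of $\mathcal{R}$ if there exist $w_n\in\mathcal{R}$ and $\varepsilon_n>0$, $\varepsilon_n\to0$, with $\varepsilon_n w_n\to e^{i\theta}$; $\mathcal{D}(\mathcal{R})$ is the set of asymptotic directions. *)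

(* Defs.v *)
From Stdlib Require Import Reals.
From Coquelicot Require Import Coquelicot.
Open Scope R_scope.

(* Partial derivatives of u : R -> R -> R  (u x y = u(x + i y)). *)
Definition dx (u : R -> R -> R) (x y : R) : R := Derive (fun s => u s y) x.
Definition dy (u : R -> R -> R) (x y : R) : R := Derive (fun t => u x t) y.

Definition cont2 (f : R -> R -> R) (x y : R) : Prop :=
  continuous (fun p : R * R => f (fst p) (snd p)) (x, y).

Definition harmonic (u : R -> R -> R) : Prop :=
  forall x y : R,
    ex_derive (fun s => u s y) x /\ ex_derive (fun t => u x t) y /\
    ex_derive (fun s => dx u s y) x /\ ex_derive (fun t => dx u x t) y /\
    ex_derive (fun s => dy u s y) x /\ ex_derive (fun t => dy u x t) y /\
    cont2 u x y /\ cont2 (dx u) x y /\ cont2 (dy u) x y /\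
    cont2 (dx (dx u)) x y /\ cont2 (dy (dx u)) x y /\
    cont2 (dx (dy u)) x y /\ cont2 (dy (dy u)) x y /\
    dx (dx u) x y + dy (dy u) x y = 0.

Definition harmonic_map (g : C -> C) : Prop :=
  harmonic (fun x y => Re (g (x, y))) /\ harmonic (fun x y => Im (g (x, y))).

Definition asymptotic_direction (S : C -> Prop) (z : C) : Prop :=
  Cmod z = 1 /\
  exists (w : nat -> C) (eps : nat -> R),
    (forall n, S (w n)) /\ (forall n, 0 < eps n) /\
    is_lim_seq eps 0 /\
    filterlim (fun n => Cmult (RtoC (eps n)) (w n)) eventually (locally z).

Definition image (g : C -> C) : C -> Prop := fun w => exists z, g z = w.

Definition cexpi (theta : R) : C := (cos theta, sin theta).

(* Main.v *)
Require Import Defs.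
From Stdlib Require Import Reals Lra Classical ClassicalEpsilon.
From Coquelicot Require Import Coquelicot.
Open Scope R_scope.

Definition Dp (S : C -> Prop) (z : C) : Prop :=
  forall d h, 0 < d -> 0 < h -> exists w e, S w /\ 0 < e < h /\
    Rabs (e * fst w - fst z) < d /\ Rabs (e * snd w - snd z) < d.

Lemma arch (e : R) : 0 < e -> exists N : nat, forall n, (N <= n)%nat -> / (INR n + 1) < e.
Proof.
  intros He. destruct (nfloor_ex (/ e)) as [N HN].
  { left; apply Rinv_0_lt_compat; lra. }
  exists N. intros n Hn. apply le_INR in Hn.
  rewrite <- (Rinv_inv e). apply Rinv_lt_contravar.
  - apply Rmult_lt_0_compat; [apply Rinv_0_lt_compat; lra | pose proof (pos_INR n); lra].
  - lra.
Qed.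

Lemma ballR (x e y : R) : Rabs (y - x) < e -> ball x e y.
Proof. intro H; exact H. Qed.

Lemma D_of_Dp S z : Cmod z = 1 -> Dp S z -> asymptotic_direction S z.
Proof.
  intros Hm H. split; [exact Hm|].
  assert (Hc : forall n : nat, {p : C * R | S (fst p) /\ 0 < snd p < / (INR n + 1) /\
     Rabs (snd p * fst (fst p) - fst z) < / (INR n + 1) /\
     Rabs (snd p * snd (fst p) - snd z) < / (INR n + 1)}).
  { intro n. apply constructive_indefinite_description.
    assert (Hp : 0 < / (INR n + 1)) by (apply Rinv_0_lt_compat; pose proof (pos_INR n); lra).
    destruct (H _ _ Hp Hp) as [w [e Hwe]]. exists (w, e). exact Hwe. }
  exists (fun n => fst (proj1_sig (Hc n))), (fun n => snd (proj1_sig (Hc n))).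
  split; [|split; [|split]].
  - intro n. exact (proj1 (proj2_sig (Hc n))).
  - intro n. exact (proj1 (proj1 (proj2 (proj2_sig (Hc n))))).
  - apply is_lim_seq_spec. intro eps. destruct (arch eps (cond_pos eps)) as [N HN].
    exists N. intros n Hn. specialize (HN n Hn).
    destruct (proj2_sig (Hc n)) as [_ [[A B] _]].
    rewrite Rminus_0_r, Rabs_pos_eq by lra. lra.
  - intros P [eps HP]. destruct (arch eps (cond_pos eps)) as [N HN].
    exists N. intros n Hn. specialize (HN n Hn). apply HP.
    destruct (proj2_sig (Hc n)) as [_ [_ [A B]]].
    split; apply ballR; simpl.
    + replace (snd (proj1_sig (Hc n)) * fst (fst (proj1_sig (Hc n))) - 0 * snd (fst (proj1_sig (Hc n))) - fst z)
        with (snd (proj1_sig (Hc n)) * fst (fst (proj1_sig (Hc n))) - fst z) by ring. lra.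
    + replace (snd (proj1_sig (Hc n)) * snd (fst (proj1_sig (Hc n))) + 0 * fst (fst (proj1_sig (Hc n))) - snd z)
        with (snd (proj1_sig (Hc n)) * snd (fst (proj1_sig (Hc n))) - snd z) by ring. lra.
Qed.
Lemma final_real (k s v1 v2 N d a : R) :
  k*k+s*s = 1 -> 0 < N -> N*N = (s*v1 - k*v2)*(s*v1 - k*v2) + (s*v2 + k*v1)*(s*v2 + k*v1) ->
  0 < d -> a = 2/d + 2 ->
  d*d <= (/N*v1 - k)*(/N*v1 - k) + (/N*v2 - s)*(/N*v2 - s) ->
  d*d <= (/N*v1 + k)*(/N*v1 + k) + (/N*v2 + s)*(/N*v2 + s) ->
  d*d <= (/N*v1 + s)*(/N*v1 + s) + (/N*v2 - k)*(/N*v2 - k) ->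
  Rabs (s*v2 + k*v1) <= a * Rabs (s*v1 - k*v2) /\ ~ (Rabs (s*v2 + k*v1) <= - (1/a) * (s*v1 - k*v2)).
Proof.
  intros Hks HN HNN Hd Ha H1 H2 H3.
  set (x := /N*v1) in *. set (y := /N*v2) in *.
  set (u1 := s*x - k*y). set (u2 := s*y + k*x).
  assert (He : 0 < /N) by (apply Rinv_0_lt_compat; lra).
  assert (Hw1 : s*v1 - k*v2 = N * u1). { unfold u1, x, y. field. lra. }
  assert (Hw2 : s*v2 + k*v1 = N * u2). { unfold u2, x, y. field. lra. }
  assert (Hu : u1*u1 + u2*u2 = 1).
  { rewrite Hw1, Hw2 in HNN. assert (N*N*(u1*u1+u2*u2) = N*N*1) by nra.
    apply Rmult_eq_reg_l with (N*N); [lra| nra]. }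
  assert (I1 : (x - k)*(x-k) + (y-s)*(y-s) = u1*u1 + (u2-1)*(u2-1)) by (unfold u1,u2; nra).
  assert (I2 : (x + k)*(x+k) + (y+s)*(y+s) = u1*u1 + (u2+1)*(u2+1)) by (unfold u1,u2; nra).
  assert (I3 : (x + s)*(x+s) + (y-k)*(y-k) = (u1+1)*(u1+1) + u2*u2) by (unfold u1,u2; nra).
  assert (Had : a * d > 2) by (rewrite Ha; field_simplify; lra).
  assert (Ha0 : a > 0) by (rewrite Ha; assert (2/d > 0) by (apply Rdiv_lt_0_compat; lra); lra).
  assert (Hadd : a*a*(d*d) > 4) by nra.
  assert (Ra1 : Rabs u1 * Rabs u1 = u1*u1) by (rewrite <- Rabs_mult; apply Rabs_pos_eq; nra).
  assert (Ra2 : Rabs u2 * Rabs u2 = u2*u2) by (rewrite <- Rabs_mult; apply Rabs_pos_eq; nra).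
  pose proof (Rabs_pos u1). pose proof (Rabs_pos u2).
  rewrite Hw1, Hw2, !Rabs_mult, (Rabs_pos_eq N) by lra.
  split.
  - apply Rnot_lt_le; intro Hc.
    assert (Hc' : Rabs u2 > a * Rabs u1) by nra.
    assert (Hb : a*a*(u1*u1) < 1).
    { assert (0 <= a * Rabs u1) by nra.
      assert (a*a*(Rabs u1 * Rabs u1) < Rabs u2 * Rabs u2).
      { assert (0 < (Rabs u2 - a*Rabs u1)*(Rabs u2 + a * Rabs u1)) by (apply Rmult_lt_0_compat; lra). nra. }
      nra. }
    destruct (Rle_or_lt 0 u2).
    + assert (d*d <= 2*(u1*u1)) by nra. nra.
    + assert (d*d <= 2*(u1*u1)) by nra. nra.
  - intro Hc.
    assert (Hc' : Rabs u2 <= - (1/a) * u1).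
    { apply Rmult_le_reg_l with N; [lra|]. replace (N * (- (1/a) * u1)) with (-(1/a) * (N*u1)) by ring. exact Hc. }
    assert (Hu1 : u1 <= 0) by (pose proof (Rabs_pos u2); assert (0 < 1/a) by (apply Rdiv_lt_0_compat; lra); nra).
    assert (Hb : a*a*(u2*u2) <= 1).
    { assert (a * Rabs u2 <= - u1).
      { apply Rmult_le_compat_l with (r := a) in Hc'; [|lra]. replace (a * (- (1/a) * u1)) with (-u1) in Hc' by (field; lra). exact Hc'. }
      assert (0 <= a * Rabs u2) by nra.
      assert (a*a*(Rabs u2*Rabs u2) <= u1*u1).
      { assert (0 <= (-u1 - a*Rabs u2)*(-u1 + a * Rabs u2)) by (apply Rmult_le_pos; lra). nra. }
      nra. }
    assert (d*d <= 2*(u2*u2)) by nra. nra.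
Qed.

Lemma Dp_closed S z :
  (forall d, 0 < d -> exists z', Rabs (fst z' - fst z) < d /\ Rabs (snd z' - snd z) < d /\ Dp S z') ->
  Dp S z.
Proof.
  intros H d h Hd Hh. destruct (H (d/2)) as [z' [H1 [H2 H3]]]; [lra|].
  destruct (H3 (d/2) h) as [w [e [Hw [He [A B]]]]]; try lra.
  exists w, e. split; [exact Hw|split; [exact He|]].
  apply Rabs_def2 in H1, H2, A, B. split; apply Rabs_def1; lra.
Qed.

Lemma c_cont t e : 0 < e -> exists d, 0 < d /\ forall s, Rabs (s - t) < d ->
  Rabs (cos s - cos t) < e /\ Rabs (sin s - sin t) < e.
Proof.
  intros He.
  pose proof (continuity_cos t) as Hc. pose proof (continuity_sin t) as Hs.
  unfold continuity_pt, continue_in, limit1_in, limit_in in Hc, Hs.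
  destruct (Hc e He) as [d1 [Hd1 H1]]. destruct (Hs e He) as [d2 [Hd2 H2]].
  exists (Rmin d1 d2). split; [apply Rmin_pos; lra|].
  intros s Hst. destruct (Req_dec s t) as [->|Hne].
  - rewrite !Rminus_diag, Rabs_R0. lra.
  - assert (A : Rabs (s - t) < d1) by (pose proof (Rmin_l d1 d2); lra).
    assert (B : Rabs (s - t) < d2) by (pose proof (Rmin_r d1 d2); lra).
    specialize (H1 s). specialize (H2 s). simpl in H1, H2. unfold R_dist in H1, H2.
    split; [apply H1 | apply H2]; split; auto; split; auto; constructor.
Qed.

Lemma notQ_open S t : ~ Dp S (cos t, sin t) ->
  exists d, 0 < d /\ forall s, Rabs (s - t) < d -> ~ Dp S (cos s, sin s).
Proof.
  intros H. apply NNPP; intro Hn. apply H. apply Dp_closed.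
  intros e He. destruct (c_cont t e He) as [d [Hd Hc]].
  apply NNPP; intro Hn2. apply Hn. exists d. split; [exact Hd|].
  intros s Hs HQ. apply Hn2. exists (cos s, sin s). simpl.
  destruct (Hc s Hs). auto.
Qed.

Lemma lc_const (Q : R -> Prop) :
  (forall t, Q t -> exists d, 0 < d /\ forall s, Rabs (s - t) < d -> Q s) ->
  (forall t, ~ Q t -> exists d, 0 < d /\ forall s, Rabs (s - t) < d -> ~ Q s) ->
  Q 0 -> forall b, 0 <= b -> Q b.
Proof.
  intros Ho Hc H0 b Hb. apply NNPP; intro Hnb.
  set (E := fun x => 0 <= x <= b /\ forall s, 0 <= s <= x -> Q s).
  assert (E0 : E 0).
  { split; [lra|]. intros s Hs. replace s with 0 by lra. exact H0. }
  destruct (completeness E) as [m [Hub Hlub]].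
  { exists b. intros x Ex. apply Ex. }
  { exists 0. exact E0. }
  assert (Hm0 : 0 <= m) by (apply Hub; exact E0).
  assert (Hmb : m <= b) by (apply Hlub; intros x Ex; apply Ex).
  assert (Hbelow : forall s, 0 <= s < m -> Q s).
  { intros s Hs. apply NNPP; intro Hns.
    assert (m <= s).
    { apply Hlub. intros x Ex. destruct (Rle_or_lt x s) as [|Hxs]; [lra|].
      exfalso. apply Hns. apply (proj2 Ex). lra. }
    lra. }
  destruct (classic (Q m)) as [Qm|Qm].
  - destruct (Ho m Qm) as [d [Hd Hd']].
    assert (Ex : E (Rmin b (m + d/2))).
    { split.
      - split; [apply Rmin_glb; lra| apply Rmin_l].
      - intros s Hs. destruct (Rlt_or_le s m).
        + apply Hbelow. lra.
        + apply Hd'. pose proof (Rmin_r b (m + d/2)). rewrite Rabs_pos_eq; lra. }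
    pose proof (Hub _ Ex). unfold Rmin in H. destruct (Rle_dec b (m + d/2)).
    + apply Hnb. replace b with m by lra. exact Qm.
    + lra.
  - destruct (Hc m Qm) as [d [Hd Hd']].
    assert (Hm : 0 < m).
    { destruct Hm0 as [|Hm]; [assumption|]. subst m. contradiction. }
    set (s := Rmax 0 (m - d/2)).
    assert (Hs1 : 0 <= s) by apply Rmax_l.
    assert (Hs2 : s < m) by (unfold s, Rmax; destruct (Rle_dec 0 (m - d/2)); lra).
    assert (Hs3 : m - d/2 <= s) by apply Rmax_r.
    apply (Hd' s).
    + rewrite Rabs_left; lra.
    + apply Hbelow. lra.
Qed.

Lemma exists_good S :
  (forall t, ~ (Dp S (cos t, sin t) /\ Dp S (cos (t + PI), sin (t + PI)))) ->
  exists t, ~ Dp S (cos t, sin t) /\ ~ Dp S (cos (t + PI), sin (t + PI)) /\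
            ~ Dp S (cos (t + PI/2), sin (t + PI/2)).
Proof.
  intros Hx.
  set (Q := fun t => Dp S (cos t, sin t)).
  assert (HA : exists t, ~ Q t /\ ~ Q (t + PI)).
  { apply NNPP; intro Hn.
    assert (Hall : forall t, Q t \/ Q (t + PI)).
    { intro t. destruct (classic (Q t)); [left; auto|]. destruct (classic (Q (t + PI))); [right; auto|].
      exfalso; apply Hn; exists t; auto. }
    assert (Hnot : forall t, ~ Q t -> exists d, 0 < d /\ forall s, Rabs (s - t) < d -> ~ Q s).
    { intros t Ht. exact (notQ_open S t Ht). }
    assert (Hopen : forall t, Q t -> exists d, 0 < d /\ forall s, Rabs (s - t) < d -> Q s).
    { intros t Ht. assert (Hn' : ~ Q (t + PI)) by (intro; apply (Hx t); split; auto).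
      destruct (Hnot _ Hn') as [d [Hd Hd']]. exists d. split; auto.
      intros s Hs. destruct (Hall s) as [|Hs']; auto. exfalso. apply (Hd' (s + PI)); auto.
      replace (s + PI - (t + PI)) with (s - t) by ring. exact Hs. }
    assert (HPI : 0 <= PI) by (left; exact PI_RGT_0).
    destruct (classic (Q 0)) as [Q0|Q0].
    - apply (Hx 0). split; [exact Q0|]. rewrite Rplus_0_l. exact (lc_const Q Hopen Hnot Q0 PI HPI).
    - assert (H1 : ~ Q PI).
      { apply (lc_const (fun t => ~ Q t)); [exact Hnot | | exact Q0 | exact HPI].
        intros t Ht. apply NNPP in Ht. destruct (Hopen t Ht) as [d [Hd Hd']].
        exists d; split; [exact Hd|]. intros s Hs Hns. apply Hns. auto. }
      destruct (Hall 0) as [|H2]; auto. rewrite Rplus_0_l in H2. auto. }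
  destruct HA as [t [H1 H2]].
  destruct (classic (Q (t + PI/2))) as [H3|H3].
  - exists (t + PI). split; [exact H2|split].
    + intro H4. apply H1. unfold Q in H4. rewrite !neg_cos, !neg_sin, !Ropp_involutive in H4. exact H4.
    + intro H4. apply (Hx (t + PI/2)). split; [exact H3|].
      replace (t + PI/2 + PI) with (t + PI + PI/2) by ring. exact H4.
  - exists t. auto.
Qed.

Lemma notDp_ex S z : ~ Dp S z -> exists d h, 0 < d /\ 0 < h /\
  forall w e, S w -> 0 < e < h -> d <= Rabs (e * fst w - fst z) \/ d <= Rabs (e * snd w - snd z).
Proof.
  intros H. apply NNPP; intro Hn. apply H. intros d h Hd Hh.
  apply NNPP; intro Hn2. apply Hn. exists d, h. split; [auto|split; [auto|]].
  intros w e Hw He.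
  destruct (Rle_or_lt d (Rabs (e * fst w - fst z))); [left; auto|].
  destruct (Rle_or_lt d (Rabs (e * snd w - snd z))); [right; auto|].
  exfalso. apply Hn2. exists w, e. auto.
Qed.

Lemma sq_of_abs d x y : 0 < d -> d <= Rabs x \/ d <= Rabs y -> d * d <= x * x + y * y.
Proof.
  intros Hd [H|H].
  - assert (Rabs x * Rabs x = x * x) by (rewrite <- Rabs_mult; apply Rabs_pos_eq; nra). nra.
  - assert (Rabs y * Rabs y = y * y) by (rewrite <- Rabs_mult; apply Rabs_pos_eq; nra). nra.
Qed.

Lemma angle s k : s * s + k * k = 1 -> exists th, 0 <= th < 2 * PI /\ cos th = s /\ sin th = k.
Proof.
  intros H. assert (Hb : -1 <= s <= 1) by nra.
  pose proof (acos_bound s) as Ha. pose proof PI_RGT_0.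
  assert (Hsq : sqrt (1 - s²) = Rabs k).
  { rewrite <- sqrt_Rsqr_abs. f_equal. unfold Rsqr. lra. }
  destruct (Rle_or_lt 0 k) as [Hk|Hk].
  - exists (acos s). split; [lra|]. split; [apply cos_acos; auto|].
    rewrite sin_acos by auto. rewrite Hsq, Rabs_pos_eq; auto.
  - exists (2 * PI - acos s). split.
    + split; [lra|]. destruct (proj1 Ha) as [|Hz]; [lra|].
      exfalso. assert (cos (acos s) = 1) by (rewrite <- Hz; apply cos_0).
      rewrite cos_acos in H1 by auto. subst s. nra.
    + rewrite cos_minus, sin_minus, cos_2PI, sin_2PI, cos_acos, sin_acos by auto.
      rewrite Hsq, Rabs_left by auto. split; ring.
Qed.

Lemma cmod_unit x y : x * x + y * y = 1 -> Cmod (x, y) = 1.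
Proof. intros H. unfold Cmod; simpl. replace (x * (x * 1) + y * (y * 1)) with 1 by lra. apply sqrt_1. Qed.

Theorem corollary3 (g : C -> C) :
  harmonic_map g ->
  ~ (exists z : C, asymptotic_direction (image g) z /\
                   asymptotic_direction (image g) (Copp z)) ->
  exists (theta rho a : R),
    0 <= theta < 2 * PI /\ 0 < rho /\ 1 < a /\
    forall w : C, image (fun z => Cmult (cexpi theta) (g z)) w ->
      Cmod w <= rho \/
      (Rabs (Im w) <= a * Rabs (Re w) /\ ~ (Rabs (Im w) <= - (1 / a) * Re w)).
Proof.
  intros _ Hanti. set (S := image g).
  assert (Hx : forall t, ~ (Dp S (cos t, sin t) /\ Dp S (cos (t + PI), sin (t + PI)))).
  { intros t [H1 H2]. apply Hanti. exists (cos t, sin t).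
    pose proof (sin2_cos2 t) as Ht. unfold Rsqr in Ht. split.
    - apply D_of_Dp; [apply cmod_unit; lra | exact H1].
    - rewrite neg_cos, neg_sin in H2. unfold Copp; simpl.
      apply D_of_Dp; [apply cmod_unit; lra | exact H2]. }
  destruct (exists_good S Hx) as [t [N1 [N2 N3]]].
  rewrite neg_cos, neg_sin in N2.
  rewrite cos_plus, sin_plus, cos_PI2, sin_PI2 in N3.
  replace (cos t * 0 - sin t * 1) with (- sin t) in N3 by ring.
  replace (sin t * 0 + cos t * 1) with (cos t) in N3 by ring.
  pose proof (sin2_cos2 t) as Hks. unfold Rsqr in Hks.
  set (k := cos t) in *. set (s := sin t) in *.
  destruct (notDp_ex _ _ N1) as [d1 [h1 [Hd1 [Hh1 D1]]]].
  destruct (notDp_ex _ _ N2) as [d2 [h2 [Hd2 [Hh2 D2]]]].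
  destruct (notDp_ex _ _ N3) as [d3 [h3 [Hd3 [Hh3 D3]]]].
  destruct (angle s k) as [th [Hth [Hc Hs]]]; [lra|].
  set (d := Rmin d1 (Rmin d2 d3)).
  assert (Hdd1 : d <= d1) by apply Rmin_l.
  assert (Hdd2 : d <= d2) by (unfold d; pose proof (Rmin_r d1 (Rmin d2 d3)); pose proof (Rmin_l d2 d3); lra).
  assert (Hdd3 : d <= d3) by (unfold d; pose proof (Rmin_r d1 (Rmin d2 d3)); pose proof (Rmin_r d2 d3); lra).
  assert (Hd : 0 < d) by (unfold d; repeat apply Rmin_pos; lra).
  assert (Hi1 : 0 < / h1) by (apply Rinv_0_lt_compat; lra).
  assert (Hi2 : 0 < / h2) by (apply Rinv_0_lt_compat; lra).
  assert (Hi3 : 0 < / h3) by (apply Rinv_0_lt_compat; lra).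
  exists th, (/ h1 + / h2 + / h3 + 1), (2 / d + 2).
  split; [exact Hth|]. split; [lra|]. split.
  { assert (0 < 2 / d) by (apply Rdiv_lt_0_compat; lra). lra. }
  intros w [z Hz]. subst w.
  assert (Sv : S (g z)) by (exists z; reflexivity).
  revert Sv. destruct (g z) as [v1 v2]. intro Sv.
  unfold cexpi, Cmult, Cmod, Re, Im; simpl. rewrite Hc, Hs.
  set (A := s * v1 - k * v2). set (B := s * v2 + k * v1).
  set (N := sqrt (A * (A * 1) + B * (B * 1))).
  destruct (Rle_or_lt N (/ h1 + / h2 + / h3 + 1)) as [Hle|Hbig]; [left; exact Hle | right].
  assert (HN : 0 < N) by lra.
  assert (HNN : N * N = A * A + B * B).
  { unfold N. rewrite sqrt_sqrt; [ring | nra]. }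
  assert (He : 0 < / N) by (apply Rinv_0_lt_compat; lra).
  assert (Hlt : forall h, 0 < h -> / h < N -> 0 < / N < h).
  { intros h Hh Hhn. split; [exact He|]. rewrite <- (Rinv_inv h).
    apply Rinv_lt_contravar; [apply Rmult_lt_0_compat; [apply Rinv_0_lt_compat; lra | lra] | exact Hhn]. }
  pose proof (sq_of_abs _ _ _ Hd1 (D1 _ _ Sv (Hlt h1 Hh1 ltac:(lra)))) as E1.
  pose proof (sq_of_abs _ _ _ Hd2 (D2 _ _ Sv (Hlt h2 Hh2 ltac:(lra)))) as E2.
  pose proof (sq_of_abs _ _ _ Hd3 (D3 _ _ Sv (Hlt h3 Hh3 ltac:(lra)))) as E3.
  simpl in E1, E2, E3.
  apply (final_real k s v1 v2 N d); try lra.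
  - unfold A, B in HNN. exact HNN.
  - assert (d * d <= d1 * d1) by nra. lra.
  - replace ((/ N * v1 + k) * (/ N * v1 + k) + (/ N * v2 + s) * (/ N * v2 + s))
      with ((/ N * v1 - - k) * (/ N * v1 - - k) + (/ N * v2 - - s) * (/ N * v2 - - s)) by ring.
    assert (d * d <= d2 * d2) by nra. lra.
  - replace ((/ N * v1 + s) * (/ N * v1 + s) + (/ N * v2 - k) * (/ N * v2 - k))
      with ((/ N * v1 - - s) * (/ N * v1 - - s) + (/ N * v2 - k) * (/ N * v2 - k)) by ring.
    assert (d * d <= d3 * d3) by nra. lra.
Qed.
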